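(* The vector $\Gamma:=\big(\widehat\zeta-\Lambda\widehat\zeta,\ \Lambda\widehat\zeta-\Lambda^2\widehat\zeta\big)$ satisfies $\mathbf L\Gamma=\Gamma$, i.e. it is an eigenfunction of $\mathbf L$ with eigenvalue $1$. Moreover $\Gamma=-\frac{d}{dT}\Phi^T_{LP}\big|_{T=0}$, where $\Phi^T_{LP}(z):=\big((T+1)^{-1}\widehat\zeta(z(T+1)),\ \widehat\mu(z(T+1))\big)$ and $\widehat\mu:=\Lambda\widehat\zeta-\widehat\zeta$.
   Context: LP profile: $(\widehat\rho,\widehat\omega)$ real-analytic, even, solving $\widehat\rho'=-\frac{2y\widehat\rho\widehat\omega(\widehat\rho-\widehat\omega)}{1-y^2\widehat\omega^2}$, $\widehat\omega'=\frac{1-3\widehat\omega}{y}+\frac{2y\widehat\omega^2(\widehat\rho-\widehat\omega)}{1-y^2\widehat\omega^2}$, $\widehat\omega(0)=\frac13$, $\widehat\rho(0)>\frac13$. $\widehat\zeta$: increasing solution of $z\widehat\zeta'=\widehat\zeta\,\widehat\omega(\widehat\zeta)$ with $z^{-1/3}\widehat\zeta(z)\to1$ as $z\to0$; $C_{LP}:=\frac23\widehat\rho(0)$, so that $(z^2-\widehat\zeta_z^{-2})\widehat\zeta_{zz}+C_{LP}z\widehat\zeta^{-2}-2\widehat\zeta^{-1}=0$. $\widehat\partial_z:=z^{2/3}\partial_z$, $\widehat D_zf:=\partial_z(z^{2/3}f)$, $\Lambda:=z\partial_z$, $\widehat G:=(\widehat\partial_z\widehat\zeta)^{-2}$, $K\theta:=\widehat\partial_z(\widehat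 G\widehat D_z\theta)$, $\mathcal V:=\frac29z^{-2/3}\widehat G-2\widehat\zeta^{-2}+\frac43z^{-1/3}(\widehat\partial_z^2\widehat\zeta)\widehat G^{3/2}+2C_{LP}z\widehat\zeta^{-3}$, and $\mathbf L(\theta,\phi):=(\phi-\Lambda\theta+\theta,\ -\Lambda\phi+K\theta+\mathcal V\theta)$ (acting on smooth functions on $(0,\infty)$). *)

(* Defs.v *)
From Stdlib Require Import Reals.
From Coquelicot Require Import Coquelicot.
Open Scope R_scope.

Definition real_analytic (f : R -> R) : Prop :=
  forall x0 : R, exists r : R, 0 < r /\ exists a : nat -> R,
    forall y : R, Rabs (y - x0) < r -> is_pseries a (y - x0) (f y).

Definition even_fun (f : R -> R) : Prop := forall y, f (- y) = f y.

Definition LP_profile (rho om : R -> R) : Prop :=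
  real_analytic rho /\ real_analytic om /\ even_fun rho /\ even_fun om /\
  (forall y, y <> 0 -> 1 - y ^ 2 * om y ^ 2 <> 0 ->
     is_derive rho y (- (2 * y * rho y * om y * (rho y - om y)) / (1 - y ^ 2 * om y ^ 2)) /\
     is_derive om y ((1 - 3 * om y) / y
                     + (2 * y * om y ^ 2 * (rho y - om y)) / (1 - y ^ 2 * om y ^ 2))) /\
  om 0 = 1 / 3 /\ rho 0 > 1 / 3.

Definition LP_zeta (om zeta : R -> R) : Prop :=
  (forall z1 z2, 0 < z1 -> z1 < z2 -> zeta z1 < zeta z2) /\
  (forall z, 0 < z -> is_derive zeta z (zeta z * om (zeta z) / z)) /\
  filterlim (fun z => Rpower z (- (1 / 3)) * zeta z) (at_right 0) (locally 1).

Definition C_LP (rho : R -> R) : R := 2 / 3 * rho 0.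

(* Operators, acting on functions on (0,oo) (only evaluated at z > 0). *)
Definition hd (f : R -> R) : R -> R := fun z => Rpower z (2 / 3) * Derive f z.
Definition hD (f : R -> R) : R -> R := Derive (fun z => Rpower z (2 / 3) * f z).
Definition Lam (f : R -> R) : R -> R := fun z => z * Derive f z.

Definition hG (zeta : R -> R) : R -> R := fun z => / (hd zeta z) ^ 2.

Definition Kop (zeta : R -> R) (th : R -> R) : R -> R :=
  hd (fun z => hG zeta z * hD th z).

Definition Vpot (rho zeta : R -> R) : R -> R := fun z =>
  2 / 9 * Rpower z (- (2 / 3)) * hG zeta z
  - 2 * / (zeta z) ^ 2
  + 4 / 3 * Rpower z (- (1 / 3)) * hd (hd zeta) z * Rpower (hG zeta z) (3 / 2)
  + 2 * C_LP rho * z * / (zeta z) ^ 3.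

Definition Lop1 (th ph : R -> R) : R -> R := fun z => ph z - Lam th z + th z.
Definition Lop2 (rho zeta : R -> R) (th ph : R -> R) : R -> R :=
  fun z => - Lam ph z + Kop zeta th z + Vpot rho zeta z * th z.

Definition Gam1 (zeta : R -> R) : R -> R := fun z => zeta z - Lam zeta z.
Definition Gam2 (zeta : R -> R) : R -> R := fun z => Lam zeta z - Lam (Lam zeta) z.

Definition hmu (zeta : R -> R) : R -> R := fun z => Lam zeta z - zeta z.

(* Main.v *)
Require Import Defs.
From Stdlib Require Import Reals Lra Lia Arith Classical.
From Coquelicot Require Import Coquelicot.
Open Scope R_scope.

Lemma lim0_bounded (u : nat -> R) : is_lim_seq u 0 -> exists M, forall n, Rabs (u n) <= M.
Proof.
  intros H. apply is_lim_seq_spec in H.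
  destruct (H (mkposreal 1 Rlt_0_1)) as [N HN]. simpl in HN.
  assert (Hb : forall n, Rabs (u n) <= 1 + sum_f_R0 (fun k => Rabs (u k)) N).
  { intros n. destruct (le_lt_dec N n) as [Hn|Hn].
    - specialize (HN n Hn). rewrite Rminus_0_r in HN.
      assert (0 <= sum_f_R0 (fun k => Rabs (u k)) N).
      { apply cond_pos_sum. intros; apply Rabs_pos. }
      lra.
    - assert (Rabs (u n) <= sum_f_R0 (fun k => Rabs (u k)) N).
      { clear HN H. assert (Hn' : (n <= N)%nat) by lia. clear Hn.
        induction N as [|N IH].
        + assert (n = 0%nat) by lia. subst. simpl. lra.
        + simpl. destruct (Nat.eq_dec n (S N)) as [->|Hne].
          * assert (0 <= sum_f_R0 (fun k => Rabs (u k)) N).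
            { apply cond_pos_sum. intros; apply Rabs_pos. } lra.
          * specialize (IH ltac:(lia)). pose proof (Rabs_pos (u (S N))). lra. }
      lra. }
  eexists; exact Hb.
Qed.

Lemma radius_ge (a : nat -> R) (r : R) :
  (forall h, 0 <= h < r -> ex_pseries a h) -> Rbar_le r (CV_radius a).
Proof.
  intros H.
  pose proof (CV_radius_bounded a) as [Hub Hlub].
  assert (Hin : forall h, 0 <= h < r -> Rbar_le h (CV_radius a)).
  { intros h Hh. apply Hub. apply lim0_bounded.
    specialize (H h Hh). apply ex_series_lim_0 in H.
    eapply is_lim_seq_ext; [|exact H]. intros n. simpl.
    unfold scal; simpl. unfold mult; simpl. rewrite Rmult_comm, pow_n_pow. reflexivity. }
  destruct (CV_radius a) as [l| |] eqn:E.
  - simpl. destruct (Rle_dec r 0) as [Hr|Hr].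
    + pose proof (CV_radius_ge_0 a) as H0. rewrite E in H0. simpl in H0. lra.
    + destruct (Rle_dec r l) as [|Hrl]; [assumption|].
      exfalso.
      pose proof (CV_radius_ge_0 a) as H0. rewrite E in H0. simpl in H0.
      specialize (Hin ((l + r)/2) ltac:(lra)). simpl in Hin. lra.
  - simpl. trivial.
  - pose proof (CV_radius_ge_0 a) as H0. rewrite E in H0. simpl in H0. contradiction.
Qed.

Lemma ball_R (y e t : R) : ball y e t -> Rabs (t - y) < e.
Proof. intros H. exact H. Qed.

Lemma loc_ball (P : R -> Prop) x r y : Rabs (y - x) < r ->
  (forall t, Rabs (t - x) < r -> P t) -> locally y P.
Proof.
  intros Hy H.
  assert (He : 0 < r - Rabs (y - x)) by lra.
  exists (mkposreal _ He). intros t Ht. apply ball_R in Ht. simpl in Ht.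
  apply H.
  replace (t - x) with ((t - y) + (y - x)) by ring.
  pose proof (Rabs_triang (t - y) (y - x)). lra.
Qed.

Lemma loc_pos (P : R -> Prop) x : 0 < x -> (forall t, 0 < t -> P t) -> locally x P.
Proof.
  intros Hx H. apply (loc_ball P x x x).
  - rewrite Rminus_diag, Rabs_R0. lra.
  - intros t Ht. apply H. apply Rabs_def2 in Ht. lra.
Qed.

Lemma an_loc f : real_analytic f -> forall x, exists r, 0 < r /\ exists a,
  Rbar_le r (CV_radius a) /\ forall y, Rabs (y - x) < r -> f y = PSeries a (y - x).
Proof.
  intros Hf x. destruct (Hf x) as [r [Hr [a Ha]]].
  exists r; split; [exact Hr|]. exists a; split.
  - apply radius_ge. intros h Hh. exists (f (x + h)).
    pose proof (Ha (x + h)) as Hx. replace (x + h - x) with h in Hx by ring.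
    apply Hx. rewrite Rabs_right; lra.
  - intros y Hy. symmetry. apply is_pseries_unique. now apply Ha.
Qed.

Lemma rep_deriv f x (r : R) a : Rbar_le r (CV_radius a) ->
  (forall y, Rabs (y - x) < r -> f y = PSeries a (y - x)) ->
  forall y, Rabs (y - x) < r -> is_derive f y (PSeries (PS_derive a) (y - x)).
Proof.
  intros Hra Hf y Hy.
  apply (is_derive_ext_loc (fun t => PSeries a (t - x))).
  - apply (loc_ball _ x r y Hy). intros t Ht. symmetry. now apply Hf.
  - replace (PSeries (PS_derive a) (y - x)) with (scal 1 (PSeries (PS_derive a) (y - x))).
    2:{ unfold scal; simpl; unfold mult; simpl. ring. }
    apply (is_derive_comp (PSeries a) (fun t => t - x)).
    + apply is_derive_PSeries. eapply Rbar_lt_le_trans; [|exact Hra]. exact Hy.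
    + auto_derive; auto.
Qed.

Lemma rep_deriv2 f x (r : R) a : Rbar_le r (CV_radius a) ->
  (forall y, Rabs (y - x) < r -> f y = PSeries a (y - x)) ->
  forall y, Rabs (y - x) < r -> Derive f y = PSeries (PS_derive a) (y - x).
Proof.
  intros. apply is_derive_unique. eapply rep_deriv; eauto.
Qed.

Lemma an_ex_derive f : real_analytic f -> forall x, ex_derive f x.
Proof.
  intros Hf x. destruct (an_loc f Hf x) as [r [Hr [a [Ha Hrep]]]].
  eexists. apply (rep_deriv f x r a Ha Hrep). rewrite Rminus_diag, Rabs_R0; lra.
Qed.

Lemma an_ex_derive2 f : real_analytic f -> forall x, ex_derive (Derive f) x.
Proof.
  intros Hf x. destruct (an_loc f Hf x) as [r [Hr [a [Ha Hrep]]]].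
  eexists. apply (rep_deriv (Derive f) x r (PS_derive a)).
  - rewrite CV_radius_derive. exact Ha.
  - intros y Hy. eapply rep_deriv2; eauto.
  - rewrite Rminus_diag, Rabs_R0; lra.
Qed.

Lemma an_cont f : real_analytic f -> forall x, continuous f x.
Proof. intros Hf x. apply (ex_derive_continuous (K:=R_AbsRing) (V:=R_NormedModule)). now apply an_ex_derive. Qed.

Lemma an_cont_D f : real_analytic f -> forall x, continuous (Derive f) x.
Proof. intros Hf x. apply (ex_derive_continuous (K:=R_AbsRing) (V:=R_NormedModule)). now apply an_ex_derive2. Qed.

Lemma cont_eps f x : continuous f x -> forall eps, 0 < eps ->
  exists d, 0 < d /\ forall y, Rabs (y - x) < d -> Rabs (f y - f x) < eps.
Proof.
  intros Hc eps He.
  assert (Hl := Hc (ball (f x) (mkposreal _ He)) (locally_ball _ _)).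
  destruct Hl as [d Hd]. exists d. split; [apply cond_pos|].
  intros y Hy. apply (Hd y). exact Hy.
Qed.

Lemma cont_right_const g K d : continuity_pt g 0 -> 0 < d ->
  (forall h, 0 < h < d -> g h = K) -> g 0 = K.
Proof.
  intros Hc Hd H.
  apply continuity_pt_filterlim in Hc.
  destruct (Req_dec (g 0) K) as [|Hne]; [assumption|exfalso].
  assert (He : 0 < Rabs (g 0 - K)) by (apply Rabs_pos_lt; lra).
  destruct (cont_eps g 0 Hc _ He) as [e [He0 Hg]].
  set (h := Rmin (d/2) (e/2)).
  assert (Hh : 0 < h < d) by (unfold h; split; [apply Rmin_glb_lt; lra|]; 
     pose proof (Rmin_l (d/2) (e/2)); lra).
  assert (Hh2 : Rabs (h - 0) < e).
  { rewrite Rminus_0_r, Rabs_right by lra. pose proof (Rmin_r (d/2) (e/2)). unfold h in *. lra. }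
  specialize (Hg h Hh2). rewrite (H h Hh) in Hg.
  rewrite <- Rabs_Ropp in Hg. replace (- (K - g 0)) with (g 0 - K) in Hg by ring. lra.
Qed.

Lemma ps_const_right (c : nat -> R) (R0 K d : R) : 0 < R0 -> Rbar_le R0 (CV_radius c) -> 0 < d ->
  (forall h, 0 < h < d -> PSeries c h = K) ->
  forall x, Rabs x < R0 -> PSeries c x = K.
Proof.
  intros HR0 Hrad Hd H.
  set (d' := Rmin d R0).
  assert (Hd' : 0 < d') by (apply Rmin_glb_lt; lra).
  assert (Hd'1 : d' <= d) by apply Rmin_l.
  assert (Hd'2 : d' <= R0) by apply Rmin_r.
  assert (Hlt : forall x, Rabs x < R0 -> Rbar_lt (Rabs x) (CV_radius c)).
  { intros x Hx. eapply Rbar_lt_le_trans; [|exact Hrad]. exact Hx. }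
  assert (H0 : Rbar_lt 0 (CV_radius c)).
  { pose proof (Hlt 0 ltac:(rewrite Rabs_R0; lra)) as X. rewrite Rabs_R0 in X. exact X. }
  assert (Hcoef : forall n, (n > 0)%nat -> c n = 0).
  { intros n Hn.
    assert (E0 : Derive_n (PSeries c) n 0 = c n * INR (Factorial.fact n)).
    { apply Derive_n_coef. exact H0. }
    assert (Hg : PSeries (PS_derive_n n c) 0 = 0).
    { apply (cont_right_const _ 0 d').
      - apply PSeries_continuity. rewrite CV_radius_derive_n. apply Hlt. rewrite Rabs_R0; lra.
      - exact Hd'.
      - intros h Hh. rewrite <- Derive_n_PSeries by (apply Hlt; rewrite Rabs_right; lra).
        rewrite (Derive_n_ext_loc _ (fun _ => K)).
        + destruct n; [lia|]. apply Derive_n_const.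
        + apply (loc_ball _ (d/2) (d/2) h).
          * apply Rabs_def1; lra.
          * intros t Ht. apply Rabs_def2 in Ht. apply H. lra. }
    rewrite <- Derive_n_PSeries in Hg by (apply Hlt; rewrite Rabs_R0; lra).
    rewrite E0 in Hg. apply Rmult_integral in Hg. destruct Hg as [|Hg]; [assumption|].
    exfalso; exact (INR_fact_neq_0 n Hg). }
  assert (Hc0 : c 0%nat = K).
  { rewrite <- PSeries_0. apply (cont_right_const _ K d').
    - apply PSeries_continuity. apply Hlt. rewrite Rabs_R0; lra.
    - exact Hd'.
    - intros h Hh. apply H. lra. }
  intros x Hx.
  rewrite PSeries_decr_1 by (apply CV_radius_inside; now apply Hlt).
  rewrite (PSeries_ext _ (fun _ => 0)).
  - rewrite PSeries_const_0. rewrite Hc0. ring.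
  - intros n. unfold PS_decr_1. apply Hcoef. lia.
Qed.


Lemma dense_D rho om : LP_profile rho om -> forall y1 eps, 0 < y1 -> 0 < eps ->
  exists y, Rabs (y - y1) < eps /\ 0 < y /\ 1 - y ^ 2 * om y ^ 2 <> 0.
Proof.
  intros HP y1 eps Hy1 Heps.
  destruct HP as [_ [Han _]].
  apply NNPP. intros Hno.
  assert (HD : forall y, Rabs (y - y1) < eps -> 0 < y -> 1 - y ^ 2 * om y ^ 2 = 0).
  { intros y Hy Hy0. apply NNPP. intros Hne. apply Hno. exists y. auto. }
  set (g := fun y => y * om y).
  assert (Hgc : forall x, continuous g x).
  { intros x. unfold g. apply (ex_derive_continuous (K:=R_AbsRing) (V:=R_NormedModule)).
    apply ex_derive_mult; [apply ex_derive_id | now apply an_ex_derive]. }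
  set (s := g y1).
  assert (Hs2 : s * s = 1).
  { pose proof (HD y1 ltac:(rewrite Rminus_diag, Rabs_R0; lra) Hy1). unfold s, g. nra. }
  assert (Hsq : forall y, Rabs (y - y1) < eps -> 0 < y -> g y * g y = 1).
  { intros y Hy Hy0. pose proof (HD y Hy Hy0). unfold g. nra. }
  destruct (cont_eps g y1 (Hgc y1) 1 Rlt_0_1) as [d0 [Hd0 Hg0]].
  set (d1 := Rmin (Rmin d0 eps) y1 / 2).
  assert (Hd1 : 0 < d1 /\ d1 < d0 /\ d1 < eps /\ d1 < y1).
  { unfold d1. pose proof (Rmin_l (Rmin d0 eps) y1). pose proof (Rmin_r (Rmin d0 eps) y1).
    pose proof (Rmin_l d0 eps). pose proof (Rmin_r d0 eps).
    assert (0 < Rmin (Rmin d0 eps) y1) by (repeat apply Rmin_glb_lt; lra). lra. }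
  assert (Hloc : forall y, y1 - d1 < y <= y1 -> g y = s).
  { intros y Hy.
    assert (Hya : Rabs (y - y1) < d1) by (apply Rabs_def1; lra).
    specialize (Hg0 y ltac:(lra)). specialize (Hsq y ltac:(lra) ltac:(lra)).
    fold s in Hg0.
    assert (Hgs : (g y - s) * (g y + s) = 0) by nra.
    apply Rmult_integral in Hgs. destruct Hgs as [|Hgs]; [lra|].
    exfalso. assert (g y = - s) by lra. rewrite H in Hg0.
    replace (- s - s) with (- (2 * s)) in Hg0 by ring. rewrite Rabs_Ropp in Hg0.
    rewrite Rabs_mult in Hg0. rewrite (Rabs_right 2) in Hg0 by lra.
    assert (Rabs s = 1).
    { assert (Rabs s * Rabs s = 1) by (rewrite <- Rabs_mult, Hs2; apply Rabs_R1).
      pose proof (Rabs_pos s). nra. }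
    lra. }
  set (E := fun u => 0 <= u <= y1 /\ forall y, y1 - u < y <= y1 -> g y = s).
  assert (HEb : bound E) by (exists y1; intros u [Hu _]; lra).
  assert (HEn : exists u, E u) by (exists d1; split; [lra|exact Hloc]).
  destruct (completeness E HEb HEn) as [m [Hmub Hmlub]].
  assert (Hm1 : d1 <= m) by (apply Hmub; split; [lra|exact Hloc]).
  assert (Hm2 : m <= y1) by (apply Hmlub; intros u [Hu _]; lra).
  assert (Hstar : forall y, y1 - m < y <= y1 -> g y = s).
  { intros y Hy. apply NNPP. intros Hne.
    assert (Hub : is_upper_bound E (y1 - y)).
    { intros u [Hu Hu2]. destruct (Rle_dec u (y1 - y)) as [|Hn]; [assumption|].
      exfalso. apply Hne. apply Hu2. lra. }
    specialize (Hmlub _ Hub). lra. }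
  destruct (Rlt_dec m y1) as [Hmy|Hmy].
  - set (t := y1 - m).
    assert (Ht : 0 < t) by (unfold t; lra).
    destruct (an_loc om Han t) as [r [Hr [a [Hra Hrep]]]].
    set (b := PS_plus (PS_scal t a) (PS_incr_1 a)).
    assert (Hbrad : Rbar_le r (CV_radius b)).
    { unfold b. eapply Rbar_le_trans; [|apply CV_radius_plus].
      rewrite CV_radius_scal by lra. rewrite CV_radius_incr_1.
      revert Hra. destruct (CV_radius a) as [l| |]; simpl; auto.
      intros. rewrite Rmin_left; lra. }
    assert (Hbg : forall h, Rabs h < r -> PSeries b h = g (t + h)).
    { intros h Hh.
      assert (Hin : Rbar_lt (Rabs h) (CV_radius a)) by (eapply Rbar_lt_le_trans; [|exact Hra]; exact Hh).
      unfold b. rewrite PSeries_plus.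
      - rewrite PSeries_scal, PSeries_incr_1. unfold g.
        rewrite (Hrep (t + h)) by (replace (t + h - t) with h by ring; exact Hh).
        replace (t + h - t) with h by ring. unfold scal; simpl; unfold mult; simpl. ring.
      - apply CV_disk_correct, CV_disk_scal. apply CV_disk_inside. exact Hin.
      - apply CV_radius_inside. rewrite CV_radius_incr_1. exact Hin. }
    assert (Hconst : forall x, Rabs x < r -> PSeries b x = s).
    { apply (ps_const_right b r s (Rmin r m)); try assumption.
      - apply Rmin_glb_lt; lra.
      - intros h Hh. pose proof (Rmin_l r m). pose proof (Rmin_r r m).
        rewrite Hbg by (rewrite Rabs_right; lra). apply Hstar. unfold t. lra. }
    set (u' := Rmin y1 (m + r / 2)).
    assert (Hu' : E u').
    { split.
      - split; [|apply Rmin_l]. apply Rmin_glb; lra.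
      - intros y Hy. destruct (Rlt_dec t y) as [Hty|Hty].
        + apply Hstar. unfold t in Hty. lra.
        + pose proof (Rmin_r y1 (m + r / 2)). unfold u' in Hy.
          replace y with (t + (y - t)) by ring. rewrite <- Hbg.
          * apply Hconst. apply Rabs_def1; unfold t in *; lra.
          * apply Rabs_def1; unfold t in *; lra. }
    specialize (Hmub _ Hu'). unfold u' in Hmub.
    assert (m < Rmin y1 (m + r / 2)) by (apply Rmin_glb_lt; lra). lra.
  - assert (Hall : forall y, 0 < y <= y1 -> g y = s) by (intros y Hy; apply Hstar; lra).
    destruct (cont_eps om 0 (an_cont om Han 0) 1 Rlt_0_1) as [d2 [Hd2 Hom]].
    set (y := Rmin (Rmin y1 (d2/2)) (/ (2 * (Rabs (om 0) + 1)))).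
    assert (Hpos : 0 < Rabs (om 0) + 1) by (pose proof (Rabs_pos (om 0)); lra).
    assert (Hy : 0 < y).
    { unfold y. repeat apply Rmin_glb_lt; try lra. apply Rinv_0_lt_compat. lra. }
    assert (Hy1' : y <= y1) by (unfold y; pose proof (Rmin_l (Rmin y1 (d2/2)) (/ (2 * (Rabs (om 0) + 1)))); pose proof (Rmin_l y1 (d2/2)); lra).
    assert (Hy2 : y < d2) by (unfold y; pose proof (Rmin_l (Rmin y1 (d2/2)) (/ (2 * (Rabs (om 0) + 1)))); pose proof (Rmin_r y1 (d2/2)); lra).
    assert (Hy3 : y * (2 * (Rabs (om 0) + 1)) <= 1).
    { assert (y <= / (2 * (Rabs (om 0) + 1))) by apply Rmin_r.
      apply (Rmult_le_compat_r (2 * (Rabs (om 0) + 1))) in H; [|lra].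
      rewrite Rinv_l in H; lra. }
    specialize (Hom y ltac:(rewrite Rminus_0_r, Rabs_right; lra)).
    assert (Hb : Rabs (om y) < Rabs (om 0) + 1).
    { pose proof (Rabs_triang_inv (om y) (om 0)). lra. }
    assert (Hgy : Rabs (g y) < 1).
    { unfold g. rewrite Rabs_mult, (Rabs_right y) by lra.
      assert (y * Rabs (om y) <= y * (Rabs (om 0) + 1)) by (apply Rmult_le_compat_l; lra). lra. }
    rewrite (Hall y ltac:(lra)) in Hgy.
    assert (Rabs s * Rabs s = 1) by (rewrite <- Rabs_mult, Hs2; apply Rabs_R1).
    pose proof (Rabs_pos s). nra.
Qed.

Lemma zero_ext rho om : LP_profile rho om -> forall h : R -> R,
  (forall y, 0 < y -> continuous h y) ->
  (forall y, 0 < y -> 1 - y ^ 2 * om y ^ 2 <> 0 -> h y = 0) ->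
  forall y, 0 < y -> h y = 0.
Proof.
  intros HP h Hc Hz y Hy. apply NNPP. intros Hne.
  assert (He : 0 < Rabs (h y)) by (apply Rabs_pos_lt; exact Hne).
  destruct (cont_eps h y (Hc y Hy) _ He) as [d [Hd Hh]].
  destruct (dense_D rho om HP y (Rmin d y) Hy ltac:(apply Rmin_glb_lt; lra)) as [y' [Hy'1 [Hy'2 Hy'3]]].
  pose proof (Rmin_l d y).
  specialize (Hh y' ltac:(lra)). rewrite (Hz y' Hy'2 Hy'3) in Hh.
  rewrite Rminus_0_l, Rabs_Ropp in Hh. lra.
Qed.


Ltac exd := match goal with
 | |- ex_derive (fun x => Derive ?f x) _ => apply (an_ex_derive2 f); assumption
 | |- ex_derive (fun x => ?f x) _ => apply (an_ex_derive f); assumption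
 | |- ex_derive ?f _ => apply (an_ex_derive f); assumption
 end.

Definition h1f (rho om : R -> R) (y : R) : R :=
  3 * y ^ 2 * om y * rho y + y ^ 3 * Derive om y * rho y + y ^ 3 * om y * Derive rho y - y ^ 2 * rho y.
Definition h2f (rho om : R -> R) (y : R) : R :=
  (1 - y ^ 2 * om y ^ 2) * Derive rho y + 2 * y * rho y * om y * (rho y - om y).

Lemma h1_zero rho om : LP_profile rho om -> forall y, 0 < y -> h1f rho om y = 0.
Proof.
  intros HP. pose proof HP as [Har [Hao [_ [_ [Hode _]]]]].
  apply (zero_ext rho om HP).
  - intros y Hy. apply (ex_derive_continuous (K:=R_AbsRing) (V:=R_NormedModule)).
    unfold h1f. eexists. auto_derive.
    + repeat split; exd.
    + reflexivity.
  - intros y Hy HD. destruct (Hode y ltac:(lra) HD) as [Hr Ho].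
    unfold h1f. rewrite (is_derive_unique _ _ _ Hr), (is_derive_unique _ _ _ Ho).
    field. split; lra.
Qed.

Lemma h2_zero rho om : LP_profile rho om -> forall y, 0 < y -> h2f rho om y = 0.
Proof.
  intros HP. pose proof HP as [Har [Hao [_ [_ [Hode _]]]]].
  apply (zero_ext rho om HP).
  - intros y Hy. apply (ex_derive_continuous (K:=R_AbsRing) (V:=R_NormedModule)).
    unfold h2f. eexists. auto_derive.
    + repeat split; exd.
    + reflexivity.
  - intros y Hy HD. destruct (Hode y ltac:(lra) HD) as [Hr Ho].
    unfold h2f. rewrite (is_derive_unique _ _ _ Hr).
    field. replace ((y * om y) ^ 2) with (y ^ 2 * om y ^ 2) by ring. exact HD.
Qed.

Lemma Rpower_is_derive a x : 0 < x -> is_derive (fun t => Rpower t a) x (a * Rpower x (a - 1)).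
Proof. intros Hx. apply is_derive_Reals. now apply derivable_pt_lim_power. Qed.

Lemma Rpower_Derive a x : 0 < x -> Derive (fun t => Rpower t a) x = a * Rpower x (a - 1).
Proof. intros Hx. apply is_derive_unique. now apply Rpower_is_derive. Qed.

Lemma Rpower_ex a x : 0 < x -> ex_derive (fun t => Rpower t a) x.
Proof. intros Hx. eexists. now apply Rpower_is_derive. Qed.

Lemma Rpower_pos x a : 0 < Rpower x a.
Proof. unfold Rpower. apply exp_pos. Qed.

Lemma Rpower_cube x : 0 < x -> Rpower (x ^ 3) (1 / 3) = x.
Proof.
  intros Hx. rewrite <- (Rpower_pow 3 x Hx). rewrite Rpower_mult.
  replace (INR 3 * (1 / 3)) with 1 by (simpl; field). now apply Rpower_1.
Qed.

Lemma lim_right_eps f l : filterlim f (at_right 0) (locally l) ->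
  forall eps, 0 < eps -> exists d, 0 < d /\ forall y, 0 < y < d -> Rabs (f y - l) < eps.
Proof.
  intros H eps He.
  destruct (H _ (locally_ball l (mkposreal _ He))) as [d Hd].
  exists d. split; [apply cond_pos|]. intros y Hy. apply (Hd y).
  - change (Rabs (y - 0) < d). rewrite Rminus_0_r, Rabs_right; lra.
  - lra.
Qed.

Lemma zeta_pos om zeta : LP_zeta om zeta -> forall z, 0 < z -> 0 < zeta z.
Proof.
  intros [Hinc [_ Hlim]] z Hz.
  destruct (lim_right_eps _ _ Hlim (1/2) ltac:(lra)) as [d [Hd H]].
  set (z0 := Rmin (d/2) (z/2)).
  assert (Hz0 : 0 < z0 /\ z0 < d /\ z0 < z).
  { unfold z0. pose proof (Rmin_l (d/2) (z/2)). pose proof (Rmin_r (d/2) (z/2)).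
    assert (0 < Rmin (d/2) (z/2)) by (apply Rmin_glb_lt; lra). lra. }
  specialize (H z0 ltac:(lra)). apply Rabs_def2 in H.
  pose proof (Rpower_pos z0 (- (1/3))).
  assert (0 < zeta z0).
  { destruct (Rlt_le_dec 0 (zeta z0)) as [|Hn]; [assumption|].
    exfalso. assert (Rpower z0 (- (1/3)) * zeta z0 <= 0).
    { apply Rmult_le_0_l; lra. } lra. }
  pose proof (Hinc z0 z ltac:(lra) ltac:(lra)). lra.
Qed.

Lemma zeta_lim om zeta : LP_zeta om zeta -> filterlim zeta (at_right 0) (locally 0).
Proof.
  intros HZ. pose proof HZ as [Hinc [_ Hlim]].
  intros P [e He].
  destruct (lim_right_eps _ _ Hlim 1 Rlt_0_1) as [d [Hd H]].
  assert (He2 : 0 < e / 2) by (pose proof (cond_pos e); lra).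
  assert (Hd2 : 0 < Rmin d ((e/2)^3)) by (apply Rmin_glb_lt; [lra| apply pow_lt; lra]).
  exists (mkposreal _ Hd2). intros w Hw Hw0.
  change (Rabs (w - 0) < Rmin d ((e/2)^3)) in Hw.
  rewrite Rminus_0_r, Rabs_right in Hw by (simpl in Hw0; lra). simpl in Hw0.
  apply He. change (Rabs (zeta w - 0) < e). rewrite Rminus_0_r.
  pose proof (Rmin_l d ((e/2)^3)). pose proof (Rmin_r d ((e/2)^3)).
  specialize (H w ltac:(lra)). apply Rabs_def2 in H.
  assert (Hzw : zeta w = Rpower w (1/3) * (Rpower w (- (1/3)) * zeta w)).
  { rewrite <- Rmult_assoc, <- Rpower_plus. replace (1/3 + - (1/3)) with 0 by ring.
    rewrite Rpower_O by lra. ring. }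
  assert (Hr : Rpower w (1/3) < e / 2).
  { rewrite <- (Rpower_cube (e/2)) by lra. apply Rlt_Rpower_l; lra. }
  pose proof (Rpower_pos w (1/3)).
  pose proof (zeta_pos om zeta HZ w Hw0).
  rewrite Rabs_right by lra. rewrite Hzw.
  assert (Rpower w (1/3) * (Rpower w (- (1/3)) * zeta w) <= Rpower w (1/3) * 2)
    by (apply Rmult_le_compat_l; lra).
  lra.
Qed.

Lemma deriv_incr_nonneg f x l : (forall a b, 0 < a -> a < b -> f a < f b) ->
  0 < x -> is_derive f x l -> 0 <= l.
Proof.
  intros Hinc Hx Hd. apply is_derive_Reals in Hd.
  destruct (Rle_lt_dec 0 l) as [|Hl]; [assumption|exfalso].
  destruct (Hd (- l / 2) ltac:(lra)) as [d Hdd].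
  set (h := Rmin (d/2) x).
  assert (Hh : 0 < h < d) by (unfold h; pose proof (cond_pos d); pose proof (Rmin_l (d/2) x);
    split; [apply Rmin_glb_lt; lra | lra]).
  specialize (Hdd h ltac:(lra) ltac:(rewrite Rabs_right; lra)).
  apply Rabs_def2 in Hdd.
  pose proof (Hinc x (x + h) Hx ltac:(lra)).
  assert (0 < (f (x + h) - f x) / h) by (apply Rdiv_lt_0_compat; lra).
  lra.
Qed.

Definition Z1 (om zeta : R -> R) (w : R) : R := zeta w * om (zeta w) / w.
Definition E2 (om zeta : R -> R) (w : R) : R :=
  (Z1 om zeta w * om (zeta w) + zeta w * (Z1 om zeta w * Derive om (zeta w))) / w
  - zeta w * om (zeta w) / (w * w).
Definition Z2 om zeta := Derive (Z1 om zeta).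
Definition Z3 om zeta := Derive (Z2 om zeta).

Lemma dzeta om zeta : LP_zeta om zeta -> forall w, 0 < w -> is_derive zeta w (Z1 om zeta w).
Proof. intros [_ [H _]] w Hw. now apply H. Qed.

Lemma Dzeta om zeta : LP_zeta om zeta -> forall w, 0 < w -> Derive zeta w = Z1 om zeta w.
Proof. intros HZ w Hw. apply is_derive_unique. now apply dzeta. Qed.

Lemma exzeta om zeta : LP_zeta om zeta -> forall w, 0 < w -> ex_derive zeta w.
Proof. intros HZ w Hw. exists (Z1 om zeta w). now apply dzeta. Qed.

Lemma dZ1 om zeta : real_analytic om -> LP_zeta om zeta ->
  forall w, 0 < w -> is_derive (Z1 om zeta) w (E2 om zeta w).
Proof.
  intros Ha HZ w Hw. unfold Z1 at 1. auto_derive.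
  - repeat split; try (apply (exzeta om zeta HZ); lra); try (apply an_ex_derive; assumption); lra.
  - try change (fun x : R => zeta x) with zeta; try change (fun x : R => om x) with om.
    rewrite (Dzeta om zeta HZ w Hw). unfold E2. field. lra.
Qed.

Lemma DZ1 om zeta : real_analytic om -> LP_zeta om zeta ->
  forall w, 0 < w -> Z2 om zeta w = E2 om zeta w.
Proof. intros Ha HZ w Hw. apply is_derive_unique. now apply dZ1. Qed.

Lemma exE2 om zeta : real_analytic om -> LP_zeta om zeta ->
  forall w, 0 < w -> ex_derive (E2 om zeta) w.
Proof.
  intros Ha HZ w Hw. unfold E2. eexists. auto_derive.
  all: repeat split; try (apply (exzeta om zeta HZ); lra); try (apply (an_ex_derive2 om); assumption);
      try (apply (an_ex_derive om); assumption); try (eexists; apply (dZ1 om zeta Ha HZ); lra);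
      try nra; try reflexivity.
Qed.

Lemma exZ2 om zeta : real_analytic om -> LP_zeta om zeta ->
  forall w, 0 < w -> ex_derive (Z2 om zeta) w.
Proof.
  intros Ha HZ w Hw. destruct (exE2 om zeta Ha HZ w Hw) as [l Hl].
  exists l. apply (is_derive_ext_loc (E2 om zeta)); [|exact Hl].
  apply loc_pos; [exact Hw|]. intros t Ht. symmetry. now apply DZ1.
Qed.

Lemma dZ2 om zeta : real_analytic om -> LP_zeta om zeta ->
  forall w, 0 < w -> is_derive (Z2 om zeta) w (Z3 om zeta w).
Proof. intros Ha HZ w Hw. apply Derive_correct. now apply exZ2. Qed.

Lemma dZ1' om zeta : real_analytic om -> LP_zeta om zeta ->
  forall w, 0 < w -> is_derive (Z1 om zeta) w (Z2 om zeta w).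
Proof. intros Ha HZ w Hw. rewrite DZ1 by assumption. now apply dZ1. Qed.

Lemma flim_mult {T} (F : (T -> Prop) -> Prop) {FF : Filter F} (f g : T -> R) a b :
  filterlim f F (locally a) -> filterlim g F (locally b) ->
  filterlim (fun x => f x * g x) F (locally (a * b)).
Proof.
  intros Hf Hg. eapply filterlim_comp_2; [exact Hf|exact Hg|].
  apply (filterlim_mult (K:=R_AbsRing) a b).
Qed.

Lemma flim_minus {T} (F : (T -> Prop) -> Prop) {FF : Filter F} (f : T -> R) a b :
  filterlim f F (locally a) -> filterlim (fun x => f x - b) F (locally (a - b)).
Proof.
  intros Hf. apply (filterlim_ext (fun x => plus (f x) (- b))).
  { intros x. unfold plus; simpl. ring. }
  replace (a - b) with (plus a (- b)) by (unfold plus; simpl; ring).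
  eapply (filterlim_comp_2 f (fun _ => - b) plus); [exact Hf|apply filterlim_const|].
  apply (filterlim_plus (K:=R_AbsRing) (V:=R_NormedModule) a (- b)).
Qed.

Lemma const_pos g : (forall w, 0 < w -> is_derive g w 0) -> forall a b, 0 < a -> 0 < b -> g a = g b.
Proof.
  intros Hd a b Ha Hb.
  destruct (MVT_gen g a b (fun _ => 0)) as [c [Hc Heq]].
  - intros x Hx. apply Hd. pose proof (Rmin_glb_lt a b 0 Ha Hb). lra.
  - intros x Hx. apply continuity_pt_filterlim.
    apply (ex_derive_continuous (K:=R_AbsRing) (V:=R_NormedModule)).
    exists 0. apply Hd. pose proof (Rmin_glb_lt a b 0 Ha Hb). lra.
  - lra.
Qed.

Definition Gq (rho om zeta : R -> R) (w : R) : R :=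
  (2 / C_LP rho * zeta w ^ 3 * om (zeta w) * rho (zeta w) - w) / w.

Lemma C_pos rho om : LP_profile rho om -> 0 < C_LP rho.
Proof. intros HP. destruct HP as [_ [_ [_ [_ [_ [_ H]]]]]]. unfold C_LP. lra. Qed.

Lemma dGq rho om zeta : LP_profile rho om -> LP_zeta om zeta ->
  forall w, 0 < w -> is_derive (Gq rho om zeta) w 0.
Proof.
  intros HP HZ w Hw. pose proof HP as [Har [Hao _]].
  pose proof (C_pos rho om HP) as HC.
  pose proof (zeta_pos om zeta HZ w Hw) as Hzw.
  pose proof (h1_zero rho om HP (zeta w) Hzw) as H1.
  unfold Gq. auto_derive.
  all: repeat split; try (apply (exzeta om zeta HZ); lra); try (apply (an_ex_derive om); assumption);
      try (apply (an_ex_derive rho); assumption); try lra.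
  try change (fun x : R => zeta x) with zeta; try change (fun x : R => om x) with om;
  try change (fun x : R => rho x) with rho.
  rewrite (Dzeta om zeta HZ w Hw).
  transitivity (2 / C_LP rho * Z1 om zeta w * h1f rho om (zeta w) / w
     + 2 / C_LP rho * zeta w ^ 2 * rho (zeta w) * (Z1 om zeta w * w - zeta w * om (zeta w)) / (w * w)).
  - unfold h1f. field. lra.
  - rewrite H1. unfold Z1. field. lra.
Qed.

Lemma F_zero rho om zeta : LP_profile rho om -> LP_zeta om zeta ->
  forall w, 0 < w -> 2 / C_LP rho * zeta w ^ 3 * om (zeta w) * rho (zeta w) = w.
Proof.
  intros HP HZ w Hw. pose proof HP as [Har [Hao [_ [_ [_ [Hom0 Hrho0]]]]]].
  pose proof (C_pos rho om HP) as HC.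
  set (c := Gq rho om zeta 1).
  assert (Hc : forall a, 0 < a -> Gq rho om zeta a = c).
  { intros a Ha. apply const_pos; [apply dGq; assumption | lra | lra]. }
  pose proof HZ as [_ [_ Hlim]].
  assert (Hp : forall a, 0 < a -> Gq rho om zeta a =
     2 / C_LP rho * (Rpower a (- (1/3)) * zeta a) ^ 3 * om (zeta a) * rho (zeta a) - 1).
  { intros a Ha. unfold Gq.
    rewrite Rpow_mult_distr. rewrite <- (Rpower_pow 3 (Rpower a (- (1/3)))) by apply Rpower_pos.
    rewrite Rpower_mult. replace (- (1/3) * INR 3) with (Ropp 1) by (simpl; field).
    rewrite Rpower_Ropp, Rpower_1 by lra. field. lra. }
  assert (HL : filterlim (fun a => 2 / C_LP rho * (Rpower a (- (1/3)) * zeta a) ^ 3 * om (zeta a) * rho (zeta a) - 1)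
                 (at_right 0) (locally (2 / C_LP rho * 1 ^ 3 * om 0 * rho 0 - 1))).
  { apply (flim_minus (at_right 0)). apply (flim_mult (at_right 0)); [apply (flim_mult (at_right 0))|].
    - apply (flim_mult (at_right 0)); [apply filterlim_const|].
      replace (1 ^ 3) with (1 * (1 * 1)) by ring.
      apply (filterlim_ext (fun x => (Rpower x (- (1/3)) * zeta x) * ((Rpower x (- (1/3)) * zeta x) * (Rpower x (- (1/3)) * zeta x))));
        [intros; simpl; ring|].
      repeat (apply (flim_mult (at_right 0)); [exact Hlim|]). exact Hlim.
    - eapply filterlim_comp; [apply (zeta_lim om zeta HZ)|]. apply (an_cont om Hao).
    - eapply filterlim_comp; [apply (zeta_lim om zeta HZ)|]. apply (an_cont rho Har). }
  assert (HL0 : 2 / C_LP rho * 1 ^ 3 * om 0 * rho 0 - 1 = 0).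
  { rewrite Hom0. unfold C_LP. field. lra. }
  rewrite HL0 in HL.
  assert (c = 0).
  { apply NNPP. intros Hne.
    destruct (lim_right_eps _ _ HL (Rabs c) ltac:(apply Rabs_pos_lt; exact Hne)) as [d [Hd Hdd]].
    specialize (Hdd (d/2) ltac:(lra)). rewrite <- Hp in Hdd by lra.
    rewrite Hc in Hdd by lra. rewrite Rminus_0_r in Hdd. lra. }
  specialize (Hc w Hw). rewrite H in Hc. unfold Gq in Hc.
  apply (Rmult_eq_compat_r w) in Hc. unfold Rdiv at 1 in Hc. rewrite Rmult_assoc, Rinv_l, Rmult_1_r in Hc by lra. lra.
Qed.

Lemma Z1_pos rho om zeta : LP_profile rho om -> LP_zeta om zeta ->
  forall w, 0 < w -> 0 < Z1 om zeta w.
Proof.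
  intros HP HZ w Hw.
  pose proof (deriv_incr_nonneg zeta w (Z1 om zeta w) (proj1 HZ) Hw (dzeta om zeta HZ w Hw)).
  destruct H as [|H]; [assumption|exfalso].
  pose proof (zeta_pos om zeta HZ w Hw).
  pose proof (F_zero rho om zeta HP HZ w Hw) as HF.
  unfold Z1 in H.
  assert (om (zeta w) = 0).
  { apply (Rmult_eq_compat_r w) in H. field_simplify in H; [|lra].
    symmetry in H. apply Rmult_integral in H. destruct H; [lra|]. exact H. }
  rewrite H1 in HF. lra.
Qed.

Lemma om_zeta om zeta : LP_zeta om zeta -> forall w, 0 < w ->
  om (zeta w) = w * Z1 om zeta w / zeta w.
Proof.
  intros HZ w Hw. pose proof (zeta_pos om zeta HZ w Hw). unfold Z1. field. lra.
Qed.

Lemma rho_zeta rho om zeta : LP_profile rho om -> LP_zeta om zeta -> forall w, 0 < w ->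
  rho (zeta w) = C_LP rho / (2 * zeta w ^ 2 * Z1 om zeta w).
Proof.
  intros HP HZ w Hw. pose proof (zeta_pos om zeta HZ w Hw).
  pose proof (Z1_pos rho om zeta HP HZ w Hw). pose proof (C_pos rho om HP).
  pose proof (F_zero rho om zeta HP HZ w Hw) as HF.
  rewrite (om_zeta om zeta HZ w Hw) in HF.
  apply (Rmult_eq_reg_l (2 * zeta w ^ 2 * Z1 om zeta w)).
  2:{ apply Rgt_not_eq. apply Rmult_lt_0_compat; [|lra]. apply Rmult_lt_0_compat; [lra|]. nra. }
  transitivity (C_LP rho * (2 / C_LP rho * zeta w ^ 3 * (w * Z1 om zeta w / zeta w) * rho (zeta w)) / w).
  - field. repeat split; lra.
  - rewrite HF. field. repeat split; lra.
Qed.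

Definition ef rho om zeta (w : R) : R :=
  (1 - w ^ 2 * Z1 om zeta w ^ 2) * (2 * zeta w * Z1 om zeta w ^ 2 + zeta w ^ 2 * Z2 om zeta w)
  - C_LP rho * w * Z1 om zeta w ^ 2 + 2 * w ^ 2 * zeta w * Z1 om zeta w ^ 4.

Lemma e_zero rho om zeta : LP_profile rho om -> LP_zeta om zeta ->
  forall w, 0 < w -> ef rho om zeta w = 0.
Proof.
  intros HP HZ w Hw. pose proof HP as [Har [Hao _]].
  pose proof (zeta_pos om zeta HZ w Hw) as Hz.
  pose proof (Z1_pos rho om zeta HP HZ w Hw) as Hz1. pose proof (C_pos rho om HP) as HC.
  assert (HQ : is_derive (fun t => C_LP rho / (2 * zeta t ^ 2 * Z1 om zeta t)) w
     (- C_LP rho * (4 * zeta w * Z1 om zeta w ^ 2 + 2 * zeta w ^ 2 * Z2 om zeta w)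
        / (2 * zeta w ^ 2 * Z1 om zeta w) ^ 2)).
  { auto_derive.
    all: repeat split; try (apply (exzeta om zeta HZ); lra);
      try (exists (Z2 om zeta w); apply (dZ1' om zeta Hao HZ); lra); try lra.
    - apply Rgt_not_eq. apply Rmult_lt_0_compat; [|lra]. nra.
    - try change (fun x : R => zeta x) with zeta; try change (fun x : R => Z1 om zeta x) with (Z1 om zeta).
      rewrite (Dzeta om zeta HZ w Hw). fold (Z2 om zeta). field. split; lra. }
  assert (HP' : is_derive (fun t => rho (zeta t)) w (Derive rho (zeta w) * Z1 om zeta w)).
  { auto_derive.
    all: repeat split; try (apply (exzeta om zeta HZ); lra); try (apply (an_ex_derive rho); assumption).
    try change (fun x : R => zeta x) with zeta; try change (fun x : R => rho x) with rho.
      rewrite (Dzeta om zeta HZ w Hw). ring. }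
  assert (Heq : Derive rho (zeta w) * Z1 om zeta w =
     - C_LP rho * (4 * zeta w * Z1 om zeta w ^ 2 + 2 * zeta w ^ 2 * Z2 om zeta w)
        / (2 * zeta w ^ 2 * Z1 om zeta w) ^ 2).
  { apply (is_derive_unique (fun t => rho (zeta t)) w) in HP'. rewrite <- HP'.
    apply is_derive_unique. apply (is_derive_ext_loc _ _ _ _ (loc_pos _ w Hw (fun t Ht => eq_sym (rho_zeta rho om zeta HP HZ t Ht)))).
    exact HQ. }
  pose proof (h2_zero rho om HP (zeta w) Hz) as H2. unfold h2f in H2.
  rewrite (rho_zeta rho om zeta HP HZ w Hw), (om_zeta om zeta HZ w Hw) in H2.
  apply (Rmult_eq_compat_r (Z1 om zeta w)) in H2. rewrite Rmult_0_l in H2.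
  rewrite Rmult_plus_distr_r, Rmult_assoc, Heq in H2.
  transitivity (- 2 * zeta w ^ 4 * Z1 om zeta w ^ 2 / C_LP rho *
   ((1 - zeta w ^ 2 * (w * Z1 om zeta w / zeta w) ^ 2) *
      (- C_LP rho * (4 * zeta w * Z1 om zeta w ^ 2 + 2 * zeta w ^ 2 * Z2 om zeta w) /
       (2 * zeta w ^ 2 * Z1 om zeta w) ^ 2) +
      2 * zeta w * (C_LP rho / (2 * zeta w ^ 2 * Z1 om zeta w)) * (w * Z1 om zeta w / zeta w) *
      (C_LP rho / (2 * zeta w ^ 2 * Z1 om zeta w) - w * Z1 om zeta w / zeta w) * Z1 om zeta w)).
  - unfold ef. field. repeat split; lra.
  - rewrite H2. ring.
Qed.

Lemma Derive_loc f g x l : locally x (fun t => g t = f t) -> is_derive f x l -> Derive g x = l.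
Proof. intros Hl Hd. apply is_derive_unique. apply (is_derive_ext_loc f); [|exact Hd].
  eapply filter_imp; [|exact Hl]. intros t Ht. now symmetry. Qed.

Ltac etaz := repeat match goal with
  | |- context [fun x : R => ?f x] => change (fun x : R => f x) with f
  end.


Lemma Lam_zeta om zeta : LP_zeta om zeta -> forall w, 0 < w -> Lam zeta w = w * Z1 om zeta w.
Proof. intros HZ w Hw. unfold Lam. now rewrite (Dzeta om zeta HZ w Hw). Qed.

Lemma DLam_zeta om zeta : real_analytic om -> LP_zeta om zeta -> forall w, 0 < w ->
  Derive (Lam zeta) w = Z1 om zeta w + w * Z2 om zeta w.
Proof.
  intros Ha HZ w Hw. apply (Derive_loc (fun t => t * Z1 om zeta t)).
  - apply (loc_pos _ w); [exact Hw|]. intros t Ht. now apply Lam_zeta.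
  - auto_derive.
    + exists (Z2 om zeta w); now apply dZ1'.
    + etaz. unfold Z2. ring.
Qed.

Lemma Gam1_eq om zeta : LP_zeta om zeta -> forall w, 0 < w -> Gam1 zeta w = zeta w - w * Z1 om zeta w.
Proof. intros HZ w Hw. unfold Gam1. now rewrite (Lam_zeta om zeta HZ w Hw). Qed.

Lemma Gam2_eq om zeta : real_analytic om -> LP_zeta om zeta -> forall w, 0 < w ->
  Gam2 zeta w = - w ^ 2 * Z2 om zeta w.
Proof.
  intros Ha HZ w Hw. unfold Gam2. unfold Lam at 2.
  rewrite (DLam_zeta om zeta Ha HZ w Hw), (Lam_zeta om zeta HZ w Hw). ring.
Qed.

Lemma DGam1 om zeta : real_analytic om -> LP_zeta om zeta -> forall w, 0 < w ->
  Derive (Gam1 zeta) w = - w * Z2 om zeta w.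
Proof.
  intros Ha HZ w Hw. apply (Derive_loc (fun t => zeta t - t * Z1 om zeta t)).
  - apply (loc_pos _ w); [exact Hw|]. intros t Ht. now apply Gam1_eq.
  - auto_derive.
    + repeat split; [apply (exzeta om zeta HZ); lra| exists (Z2 om zeta w); now apply dZ1'].
    + etaz. unfold Z2. rewrite (Dzeta om zeta HZ w Hw). ring.
Qed.

Lemma DGam2 om zeta : real_analytic om -> LP_zeta om zeta -> forall w, 0 < w ->
  Derive (Gam2 zeta) w = - (2 * w * Z2 om zeta w + w ^ 2 * Z3 om zeta w).
Proof.
  intros Ha HZ w Hw. apply (Derive_loc (fun t => - t ^ 2 * Z2 om zeta t)).
  - apply (loc_pos _ w); [exact Hw|]. intros t Ht. now apply Gam2_eq.
  - auto_derive.
    + repeat split. exists (Z3 om zeta w). now apply dZ2.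
    + etaz. unfold Z3. ring.
Qed.

Lemma hd_zeta om zeta : LP_zeta om zeta -> forall w, 0 < w -> hd zeta w = Rpower w (2/3) * Z1 om zeta w.
Proof. intros HZ w Hw. unfold hd. now rewrite (Dzeta om zeta HZ w Hw). Qed.

Lemma Dhd_zeta om zeta : real_analytic om -> LP_zeta om zeta -> forall w, 0 < w ->
  Derive (hd zeta) w = 2/3 * Rpower w (2/3 - 1) * Z1 om zeta w + Rpower w (2/3) * Z2 om zeta w.
Proof.
  intros Ha HZ w Hw. apply (Derive_loc (fun t => Rpower t (2/3) * Z1 om zeta t)).
  - apply (loc_pos _ w); [exact Hw|]. intros t Ht. now apply hd_zeta.
  - auto_derive.
    + repeat split; [apply Rpower_ex; lra| exists (Z2 om zeta w); now apply dZ1'].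
    + etaz. unfold Z2. rewrite Rpower_Derive by lra. ring.
Qed.

Lemma hG_eq om zeta : LP_zeta om zeta -> forall w, 0 < w ->
  hG zeta w = / (Rpower w (2/3) * Z1 om zeta w) ^ 2.
Proof. intros HZ w Hw. unfold hG. now rewrite (hd_zeta om zeta HZ w Hw). Qed.

Lemma hDGam1 om zeta : real_analytic om -> LP_zeta om zeta -> forall w, 0 < w ->
  hD (Gam1 zeta) w = 2/3 * Rpower w (2/3 - 1) * (zeta w - w * Z1 om zeta w)
                     + Rpower w (2/3) * (- w * Z2 om zeta w).
Proof.
  intros Ha HZ w Hw. unfold hD.
  apply (Derive_loc (fun t => Rpower t (2/3) * (zeta t - t * Z1 om zeta t))).
  - apply (loc_pos _ w); [exact Hw|]. intros t Ht. now rewrite (Gam1_eq om zeta HZ t Ht).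
  - auto_derive.
    + repeat split; [apply Rpower_ex; lra| apply (exzeta om zeta HZ); lra | exists (Z2 om zeta w); now apply dZ1'].
    + etaz. unfold Z2. rewrite Rpower_Derive by lra. rewrite (Dzeta om zeta HZ w Hw). ring.
Qed.

Lemma Rp32 p : 0 < p -> Rpower (/ p ^ 2) (3/2) = / p ^ 3.
Proof.
  intros Hp. unfold Rpower. rewrite ln_Rinv by (apply pow_lt; lra).
  rewrite ln_pow by lra.
  replace (3 / 2 * - (INR 2 * ln p)) with (- (INR 3 * ln p)) by (simpl; field).
  rewrite exp_Ropp. f_equal. fold (Rpower p (INR 3)). now apply Rpower_pow.
Qed.

Lemma Rp_pos_n w q (n : nat) : 0 < w -> 3 * q = INR n -> Rpower w q = (Rpower w (1/3)) ^ n.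
Proof.
  intros Hw Hq. rewrite <- Rpower_pow by apply Rpower_pos. rewrite Rpower_mult.
  f_equal. lra.
Qed.

Lemma Rp_neg_n w q (n : nat) : 0 < w -> 3 * q = - INR n -> Rpower w q = / (Rpower w (1/3)) ^ n.
Proof.
  intros Hw Hq. rewrite <- Rpower_pow by apply Rpower_pos. rewrite Rpower_mult.
  rewrite <- Rpower_Ropp. f_equal. lra.
Qed.

Ltac exd2 := match goal with
 | |- ex_derive (fun x => Rpower x _) _ => apply Rpower_ex; lra
 | |- ex_derive (fun x => ?zeta x) ?w => eapply exzeta; [eassumption|lra]
 | |- ex_derive (fun x => Z1 ?om ?zeta x) ?w => exists (Z2 om zeta w); apply dZ1'; [assumption|assumption|lra]
 | |- ex_derive (fun x => Z2 ?om ?zeta x) ?w => exists (Z3 om zeta w); apply dZ2; [assumption|assumption|lra]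
 end.

Lemma Lop2_eq rho om zeta : LP_profile rho om -> LP_zeta om zeta -> forall z, 0 < z ->
  Lop2 rho zeta (Gam1 zeta) (Gam2 zeta) z = Gam2 zeta z.
Proof.
  intros HP HZ z Hz. pose proof HP as [Har [Hao _]].
  pose proof (zeta_pos om zeta HZ z Hz) as Hz0.
  pose proof (Z1_pos rho om zeta HP HZ z Hz) as Hz1.
  pose proof (C_pos rho om HP) as HC.
  pose proof (Rpower_pos z (2/3)) as Hp23.
  eassert (HKd : is_derive (fun w => / (Rpower w (2/3) * Z1 om zeta w) ^ 2 *
      (2/3 * Rpower w (2/3 - 1) * (zeta w - w * Z1 om zeta w) + Rpower w (2/3) * (- w * Z2 om zeta w))) z _).
  { auto_derive.
    - repeat split; try exd2.
      apply Rgt_not_eq. assert (0 < Rpower z (2/3) * Z1 om zeta z) by (apply Rmult_lt_0_compat; lra). nra.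
    - reflexivity. }
  assert (Hloc : locally z (fun w => hG zeta w * hD (Gam1 zeta) w = / (Rpower w (2/3) * Z1 om zeta w) ^ 2 *
      (2/3 * Rpower w (2/3 - 1) * (zeta w - w * Z1 om zeta w) + Rpower w (2/3) * (- w * Z2 om zeta w)))).
  { apply (loc_pos _ z Hz). intros t Ht. now rewrite (hG_eq om zeta HZ t Ht), (hDGam1 om zeta Hao HZ t Ht). }
  pose proof (Derive_loc _ (fun w => hG zeta w * hD (Gam1 zeta) w) z _ Hloc HKd) as HK.
  pose proof (e_zero rho om zeta HP HZ z Hz) as He. unfold ef in He.
  eassert (HEd : is_derive (ef rho om zeta) z _).
  { unfold ef. auto_derive.
    - repeat split; try exd2.
    - reflexivity. }
  assert (HEd0 : is_derive (ef rho om zeta) z 0).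
  { apply (is_derive_ext_loc (fun _ => 0)).
    - apply (loc_pos _ z Hz). intros t Ht. symmetry. now apply e_zero.
    - auto_derive; auto. }
  pose proof (is_derive_unique _ _ _ HEd) as He'. rewrite (is_derive_unique _ _ _ HEd0) in He'.
  clear HEd HEd0 HKd.
  unfold Lop2, Kop, Vpot. unfold hd at 1 2. unfold Lam at 1.
  match type of HK with _ = ?v => assert (HK2 : Derive (fun w : R => hG zeta w * hD (Gam1 zeta) w) z = v) by exact HK end.
  rewrite HK2. clear HK HK2.
  rewrite (DGam2 om zeta Hao HZ z Hz), (Gam1_eq om zeta HZ z Hz), (Gam2_eq om zeta Hao HZ z Hz).
  rewrite (Dhd_zeta om zeta Hao HZ z Hz), (hG_eq om zeta HZ z Hz).
  rewrite Rp32 by (apply Rmult_lt_0_compat; lra).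
  revert He'. etaz. intros He'.
  rewrite !Rpower_Derive in * by lra. rewrite (Dzeta om zeta HZ z Hz) in *.
  change (Derive (Z1 om zeta) z) with (Z2 om zeta z) in *.
  change (Derive (Z2 om zeta) z) with (Z3 om zeta z) in *.
  rewrite (Rp_pos_n z (2/3) 2 Hz) by (simpl; lra).
  rewrite (Rp_neg_n z (2/3 - 1) 1 Hz) by (simpl; lra).
  rewrite (Rp_neg_n z (2/3 - 1 - 1) 4 Hz) by (simpl; lra).
  rewrite (Rp_neg_n z (- (2/3)) 2 Hz) by (simpl; lra).
  rewrite (Rp_neg_n z (- (1/3)) 1 Hz) by (simpl; lra).
  assert (Hzu : z = Rpower z (1/3) ^ 3).
  { rewrite <- (Rp_pos_n z 1 3 Hz) by (simpl; lra). now rewrite Rpower_1. }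
  pose proof (Rpower_pos z (1/3)) as Hu.
  set (u := Rpower z (1/3)) in *.
  set (y0 := zeta z) in *. set (y1 := Z1 om zeta z) in *. set (y2 := Z2 om zeta z) in *.
  set (y3 := Z3 om zeta z) in *. set (C := C_LP rho) in *.
  clearbody u y0 y1 y2 y3 C. subst z.
  apply Rminus_diag_uniq.
  match type of He with ?E = 0 => match type of He' with 0 = ?E' =>
    transitivity ((2 * u ^ 3 * y2 / (y1 ^ 3 * y0 ^ 2) - 1 / (y0 ^ 2 * y1 ^ 2) + 2 * u ^ 3 / (y0 ^ 3 * y1)) * E
                  + (- u ^ 3 / (y1 ^ 2 * y0 ^ 2)) * E');
    [ field; repeat split; lra | rewrite He, <- He'; ring ]
  end end.
Qed.

Theorem lemmaL (rho om zeta : R -> R) :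
  LP_profile rho om -> LP_zeta om zeta ->
  (forall z, 0 < z ->
     Lop1 (Gam1 zeta) (Gam2 zeta) z = Gam1 zeta z /\
     Lop2 rho zeta (Gam1 zeta) (Gam2 zeta) z = Gam2 zeta z) /\
  (forall z, 0 < z ->
     is_derive (fun T => / (T + 1) * zeta (z * (T + 1))) 0 (- Gam1 zeta z) /\
     is_derive (fun T => hmu zeta (z * (T + 1))) 0 (- Gam2 zeta z)).
Proof.
  intros HP HZ. pose proof HP as [Har [Hao _]]. split.
  - intros z Hz. split.
    + unfold Lop1. unfold Lam at 1.
      rewrite (DGam1 om zeta Hao HZ z Hz), (Gam2_eq om zeta Hao HZ z Hz). ring.
    + now apply (Lop2_eq rho om zeta).
  - intros z Hz. split.
    + auto_derive.
      * repeat split; try lra. replace (z * (0 + 1)) with z by ring. eapply exzeta; [eassumption|lra].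
      * replace (z * (0 + 1)) with z by ring. etaz. rewrite (Dzeta om zeta HZ z Hz).
        rewrite (Gam1_eq om zeta HZ z Hz). field.
    + apply (is_derive_ext_loc (fun T => z * (T + 1) * Z1 om zeta (z * (T + 1)) - zeta (z * (T + 1)))).
      * apply (loc_ball _ 0 (1/2) 0); [rewrite Rminus_0_r, Rabs_R0; lra|].
        intros t Ht. rewrite Rminus_0_r in Ht. apply Rabs_def2 in Ht.
        unfold hmu. rewrite (Lam_zeta om zeta HZ) by nra. reflexivity.
      * auto_derive.
        -- replace (z * (0 + 1)) with z by ring. repeat split; try exd2.
        -- replace (z * (0 + 1)) with z by ring. etaz. rewrite (Dzeta om zeta HZ z Hz).
           change (Derive (Z1 om zeta) z) with (Z2 om zeta z).
           unfold Gam2. unfold Lam at 2. rewrite (DLam_zeta om zeta Hao HZ z Hz), (Lam_zeta om zeta HZ z Hz).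
           ring.
Qed.
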